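(* Consider the two-observation signaling game with observations $o_1,o_2$ (each with probability $\tfrac12$), messages $m_1,m_2$, actions $a_1,a_2$, and two reward functions $R(o_i,a_j)=1$ if $i=j$ and $0$ otherwise, and $R'(o_i,a_j)=1$ if $i\neq j$ and $0$ otherwise. There are two instructors with parameters $S,S'\in[0,1]$ and one shared executor with parameter $L\in[0,1]$, where an instructor with parameter $X$ sends $m_j$ on $o_i$ with probability $\pi_X(m_j\mid o_i)=X$ if $i=j$ and $1-X$ otherwise, and the executor takes $a_j$ on $m_i$ with probability $\pi_L(a_j\mid m_i)=L$ if $i=j$ and $1-L$ otherwise. The joint objective is $$J(S,S',L)=\sum_{o,m,a}p(o)\pi_S(m\mid o)\pi_L(a\mid m)R(o,a)+\sum_{o,m,a}p(o)\pi_{S'}(m\mid o)\pi_L(a\mid m)R'(o,a).$$ Let $(S(t),S'(t),L(t))_{t\ge0}$ evolve by the gradient flow of $J$ (gradient ascent in continuous time), clipped so that the derivative of a parameter is $0$ whenever that parameter equals $0$ or $1$, with initial values in $(0,1)$. Suppose $L(0)>\tfrac12$ and $S(0)=S'(0)$. Then the three agents do not undergo semantic drift: $L(t)\to 1$ as $t\to\infty$; in particular, the eventual executor parameter is independent of the initial instructor parameters $S(0)=S'(0)$.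
   Context: Messages are thought of as natural-language commands ($m_i$ means ''do $a_i$''). An initialization is said to undergo executor semantic drift if, after training, the executor parameter satisfies $L<\tfrac12$. *)

(* Defs.v *)
From Stdlib Require Import Reals Lra.
From Coquelicot Require Import Coquelicot.
Open Scope R_scope.

(* Observations, messages, actions are indexed by bool: true ~ index 1, false ~ index 2. *)
Definition sumb (f : bool -> R) : R := f true + f false.

Definition p_obs (o : bool) : R := 1 / 2.

Definition pol (X : R) (i j : bool) : R := if Bool.eqb i j then X else 1 - X.

Definition Rw (o a : bool) : R := if Bool.eqb o a then 1 else 0.
Definition Rw' (o a : bool) : R := if Bool.eqb o a then 0 else 1.

Definition J (S S' L : R) : R :=
  sumb (fun o => sumb (fun m => sumb (fun a =>
    p_obs o * pol S o m * pol L m a * Rw o a)))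
  + sumb (fun o => sumb (fun m => sumb (fun a =>
    p_obs o * pol S' o m * pol L m a * Rw' o a))).

Definition clip (x g : R) : R :=
  if Req_EM_T x 0 then 0 else if Req_EM_T x 1 then 0 else g.

Definition right_deriv (f : R -> R) (t v : R) : Prop :=
  filterlim (fun h => (f (t + h) - f t) / h) (at_right 0) (locally v).

(* (S, S', L) is a clipped gradient-ascent flow of J on [0, +oo) with values in [0,1].
   Solutions are continuous and satisfy the ODE with right derivatives (a classical
   two-sided derivative cannot exist at the time a parameter hits the boundary). *)
Definition clipped_flow (S S' L : R -> R) : Prop :=
  (forall t, 0 <= t -> 0 <= S t <= 1 /\ 0 <= S' t <= 1 /\ 0 <= L t <= 1) /\
  (forall t, 0 < t -> continuous S t /\ continuous S' t /\ continuous L t) /\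
  (forall t, 0 <= t ->
     right_deriv S t (clip (S t) (Derive (fun x => J x (S' t) (L t)) (S t))) /\
     right_deriv S' t (clip (S' t) (Derive (fun x => J (S t) x (L t)) (S' t))) /\
     right_deriv L t (clip (L t) (Derive (fun x => J (S t) (S' t) x) (L t)))).

(* Main.v *)
Require Import Defs.
From Stdlib Require Import Reals Lra Classical.
From Coquelicot Require Import Coquelicot.
Open Scope R_scope.


Definition locally_up (g : R -> R) (t : R) : Prop :=
  forall eps, 0 < eps -> exists d, 0 < d /\ forall h, 0 < h < d -> g t - eps * h < g (t + h).

Lemma rd_eps f t v : right_deriv f t v -> forall eps, 0 < eps ->
  exists d, 0 < d /\ forall h, 0 < h < d -> Rabs ((f (t + h) - f t) / h - v) < eps.
Proof.
  intros H eps He. apply filterlim_locally with (eps := mkposreal eps He) in H.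
  destruct H as [[d Hd] Hd']. exists d. split; [exact Hd|].
  intros h [h0 hd]. apply (Hd' h). simpl. change (Rabs (h - 0) < d).
  rewrite Rminus_0_r, Rabs_right; lra. exact h0.
Qed.

Lemma rd_up f t v k : right_deriv f t v -> k <= v -> locally_up (fun x => f x - k * x) t.
Proof.
  intros H Hk eps He. destruct (rd_eps f t v H eps He) as [d [Hd Hd']].
  exists d. split; [exact Hd|]. intros h Hh. specialize (Hd' h Hh).
  apply Rabs_def2 in Hd'. destruct Hd' as [_ Hl].
  assert (Hq : (f (t+h) - f t) / h > v - eps) by lra.
  assert (f (t+h) - f t > (v - eps) * h).
  { apply Rmult_gt_compat_r with (r := h) in Hq; [|lra].
    unfold Rdiv in Hq. rewrite Rmult_assoc, Rinv_l in Hq by lra. lra. }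
  nra.
Qed.

Lemma rd_down f t v k : right_deriv f t v -> v <= k -> locally_up (fun x => k * x - f x) t.
Proof.
  intros H Hk eps He. destruct (rd_eps f t v H eps He) as [d [Hd Hd']].
  exists d. split; [exact Hd|]. intros h Hh. specialize (Hd' h Hh).
  apply Rabs_def2 in Hd'. destruct Hd' as [Hu _].
  assert (Hq : (f (t+h) - f t) / h < v + eps) by lra.
  assert (f (t+h) - f t < (v + eps) * h).
  { apply Rmult_lt_compat_r with (r := h) in Hq; [|lra].
    unfold Rdiv in Hq. rewrite Rmult_assoc, Rinv_l in Hq by lra. lra. }
  nra.
Qed.

Lemma rd_cont f t v : right_deriv f t v -> forall eps, 0 < eps ->
  exists d, 0 < d /\ forall h, 0 < h < d -> Rabs (f (t + h) - f t) < eps.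
Proof.
  intros H eps He.
  destruct (rd_eps f t v H 1 ltac:(lra)) as [d [Hd Hd']].
  set (d' := Rmin d (eps / (Rabs v + 1))).
  assert (Hv : 0 < Rabs v + 1) by (pose proof (Rabs_pos v); lra).
  assert (Hd'0 : 0 < d') by (apply Rmin_pos; [lra| apply Rdiv_lt_0_compat; lra]).
  exists d'. split; [exact Hd'0|]. intros h [h0 hd]. unfold d' in hd.
  assert (hd1 : h < d) by (pose proof (Rmin_l d (eps / (Rabs v + 1))); lra).
  assert (hd2 : h < eps / (Rabs v + 1)) by (pose proof (Rmin_r d (eps / (Rabs v + 1))); lra).
  specialize (Hd' h (conj h0 hd1)).
  assert (E : f (t+h) - f t = ((f (t + h) - f t) / h) * h) by (field; lra).
  rewrite E, Rabs_mult, (Rabs_right h) by lra.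
  assert (Rabs ((f (t + h) - f t) / h) < Rabs v + 1).
  { pose proof (Rabs_triang_inv ((f (t + h) - f t) / h) v). lra. }
  apply Rmult_lt_compat_r with (r := Rabs v + 1) in hd2; [|lra].
  unfold Rdiv in hd2. rewrite Rmult_assoc, Rinv_l, Rmult_1_r in hd2 by lra.
  assert (Rabs ((f (t + h) - f t) / h) * h < (Rabs v + 1) * h) by (apply Rmult_lt_compat_r; lra).
  lra.
Qed.

Lemma cont_eps g c : continuous g c -> forall eps, 0 < eps ->
  exists d, 0 < d /\ forall x, Rabs (x - c) < d -> Rabs (g x - g c) < eps.
Proof.
  intros H eps He. apply filterlim_locally with (eps := mkposreal eps He) in H.
  destruct H as [[d Hd] Hd']. exists d. split; [exact Hd|]. intros x Hx.
  exact (Hd' x Hx).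
Qed.

Lemma pc_mono (g : R -> R) a b : a <= b -> (forall t, a < t <= b -> continuous g t) ->
  (forall t, a <= t < b -> locally_up g t) -> g a <= g b.
Proof.
  intros Hab Hc Hu.
  assert (Key : forall eps, 0 < eps -> g b + eps * (b - a) >= g a).
  { intros eps He.
    set (G := fun x => g x + eps * (x - a)).
    set (E := fun x => a <= x <= b /\ G x >= G a).
    destruct (completeness E) as [c [Hub Hlub]].
    { exists b. intros x [Hx _]. lra. }
    { exists a. split; [lra|]. lra. }
    assert (Hac : a <= c) by (apply Hub; split; lra).
    assert (Hcb : c <= b) by (apply Hlub; intros x [Hx _]; lra).
    assert (HGc : G c >= G a).
    { destruct (Req_dec c a) as [->|Hne]; [lra|].
      destruct (Rge_dec (G c) (G a)) as [|Hlt]; [assumption|exfalso].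
      assert (Hct : continuous G c).
      { unfold G. apply continuity_pt_filterlim.
        apply (continuity_pt_plus g (fun x => eps * (x - a))).
        apply continuity_pt_filterlim. apply Hc; lra. reg. }
      destruct (cont_eps G c Hct (G a - G c) ltac:(lra)) as [d [Hd Hd']].
      assert (exists x, E x /\ c - d < x).
      { apply Classical_Prop.NNPP. intro Hn. assert (c <= c - d); [|lra].
        apply Hlub. intros x Ex. destruct (Rle_dec x (c - d)) as [|Hx]; [assumption|].
        exfalso. apply Hn. exists x. split; [exact Ex|lra]. }
      destruct H as [x [Exx Hx]].
      assert (Hxc : x <= c) by (apply Hub; exact Exx).
      destruct Exx as [_ Ex].
      assert (Hxd : Rabs (x - c) < d) by (apply Rabs_def1; lra).
      specialize (Hd' x Hxd). apply Rabs_def2 in Hd'. lra. }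
    destruct (Req_dec c b) as [->|Hne].
    { unfold G in HGc. lra. }
    exfalso.
    destruct (Hu c ltac:(lra) eps He) as [d [Hd Hd']].
    set (h := Rmin (d/2) (b - c)).
    assert (h0 : 0 < h) by (apply Rmin_pos; lra).
    assert (h1 : h <= d/2) by apply Rmin_l.
    assert (h2 : h <= b - c) by apply Rmin_r.
    specialize (Hd' h ltac:(lra)).
    assert (E (c + h)).
    { split; [lra|]. unfold G in *. lra. }
    specialize (Hub _ H). lra. }
  destruct (Req_dec a b) as [->|Hne]; [lra|].
  destruct (Rle_dec (g a) (g b)) as [|Hn]; [assumption|exfalso].
  specialize (Key ((g a - g b) / (2 * (b - a)))).
  assert (0 < (g a - g b) / (2 * (b - a))) by (apply Rdiv_lt_0_compat; lra).
  specialize (Key H).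
  assert ((g a - g b) / (2 * (b - a)) * (b - a) = (g a - g b) / 2) by (field; lra).
  lra.
Qed.

Lemma J_eq a b c : J a b c = a*c + (1-a)*(1-c) + b*(1-c) + (1-b)*c.
Proof. unfold J, sumb, p_obs, pol, Rw, Rw'; simpl. field. Qed.

Lemma dJS a b c : Derive (fun x => J x b c) a = 2*c-1.
Proof.
  apply is_derive_unique.
  apply (is_derive_ext (fun x => x*c + (1-x)*(1-c) + b*(1-c) + (1-b)*c)).
  { intros; rewrite J_eq; reflexivity. }
  auto_derive; auto; ring.
Qed.

Lemma dJS' a b c : Derive (fun x => J a x c) b = 1-2*c.
Proof.
  apply is_derive_unique.
  apply (is_derive_ext (fun x => a*c + (1-a)*(1-c) + x*(1-c) + (1-x)*c)).
  { intros; rewrite J_eq; reflexivity. }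
  auto_derive; auto; ring.
Qed.

Lemma dJL a b c : Derive (fun x => J a b x) c = 2*(a-b).
Proof.
  apply is_derive_unique.
  apply (is_derive_ext (fun x => a*x + (1-a)*(1-x) + b*(1-x) + (1-b)*x)).
  { intros; rewrite J_eq; reflexivity. }
  auto_derive; auto; ring.
Qed.

Lemma clip_eq x g : x <> 0 -> x <> 1 -> clip x g = g.
Proof. intros; unfold clip; destruct (Req_EM_T x 0); [lra|]; destruct (Req_EM_T x 1); [lra|]; reflexivity. Qed.
Lemma clip_nn x g : 0 <= g -> 0 <= clip x g.
Proof. intros; unfold clip; destruct (Req_EM_T x 0); [lra|]; destruct (Req_EM_T x 1); lra. Qed.
Lemma clip_np x g : g <= 0 -> clip x g <= 0.
Proof. intros; unfold clip; destruct (Req_EM_T x 0); [lra|]; destruct (Req_EM_T x 1); lra. Qed.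

Lemma cont_l1 f k t : continuous f t -> continuous (fun x => f x - k * x) t.
Proof.
  intro H. apply continuity_pt_filterlim. apply (continuity_pt_minus f (fun x => k * x)).
  apply continuity_pt_filterlim; exact H. reg.
Qed.
Lemma cont_l2 f k t : continuous f t -> continuous (fun x => k * x - f x) t.
Proof.
  intro H. apply continuity_pt_filterlim. apply (continuity_pt_minus (fun x => k * x) f).
  reg. apply continuity_pt_filterlim; exact H.
Qed.

Lemma pc_closed_ge f c m : 0 < c -> continuous f c -> (forall t, 0 <= t < c -> f t >= m) -> f c >= m.
Proof.
  intros Hc Hf H. destruct (Rge_dec (f c) m) as [|Hn]; [assumption|exfalso].
  destruct (cont_eps f c Hf (m - f c) ltac:(lra)) as [d [Hd Hd']].
  set (t := c - Rmin d c / 2).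
  assert (0 < Rmin d c) by (apply Rmin_pos; lra).
  pose proof (Rmin_l d c). pose proof (Rmin_r d c).
  assert (Rabs (t - c) < d) by (unfold t; apply Rabs_def1; lra).
  specialize (Hd' t H3). apply Rabs_def2 in Hd'. specialize (H t ltac:(unfold t; lra)). lra.
Qed.

Lemma pc_closed_le f c m : 0 < c -> continuous f c -> (forall t, 0 <= t < c -> f t <= m) -> f c <= m.
Proof.
  intros Hc Hf H. destruct (Rle_dec (f c) m) as [|Hn]; [assumption|exfalso].
  destruct (cont_eps f c Hf (f c - m) ltac:(lra)) as [d [Hd Hd']].
  set (t := c - Rmin d c / 2).
  assert (0 < Rmin d c) by (apply Rmin_pos; lra).
  pose proof (Rmin_l d c). pose proof (Rmin_r d c).
  assert (Rabs (t - c) < d) by (unfold t; apply Rabs_def1; lra).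
  specialize (Hd' t H3). apply Rabs_def2 in Hd'. specialize (H t ltac:(unfold t; lra)). lra.
Qed.

Lemma pc_real_ind (P : R -> Prop) :
  (forall c, 0 <= c -> (forall t, 0 <= t < c -> P t) -> exists d, 0 < d /\ forall t, 0 <= t < c + d -> P t) ->
  forall t, 0 <= t -> P t.
Proof.
  intros H t1 Ht1. apply NNPP. intro Hn.
  set (E := fun x => 0 <= x /\ forall t, 0 <= t < x -> P t).
  destruct (completeness E) as [c [Hub Hlub]].
  { exists t1. intros x [Hx Hx']. destruct (Rle_dec x t1) as [|Hl]; [assumption|].
    exfalso; apply Hn; apply Hx'; lra. }
  { exists 0. split; [lra|]. intros; lra. }
  assert (Hc0 : 0 <= c) by (apply Hub; split; [lra|intros; lra]).
  assert (Hlt : forall t, 0 <= t < c -> P t).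
  { intros t Ht. apply NNPP. intro HnP.
    assert (c <= t); [|lra]. apply Hlub. intros x [Hx Hx'].
    destruct (Rle_dec x t) as [|Hl]; [assumption|]. exfalso; apply HnP; apply Hx'; lra. }
  destruct (H c Hc0 Hlt) as [d [Hd Hd']].
  assert (E (c + d)) by (split; [lra|exact Hd']).
  specialize (Hub _ H0). lra.
Qed.

Theorem proposition2 (S S' L : R -> R) :
  clipped_flow S S' L ->
  0 < S 0 < 1 -> 0 < S' 0 < 1 -> 0 < L 0 < 1 ->
  L 0 > 1 / 2 -> S 0 = S' 0 ->
  is_lim L p_infty 1.
Proof.
  intros [Hbd [Hcont Hrd0]] HS0 HS'0 HL0 HLh Heq.
  assert (Hrd : forall t, 0 <= t ->
    right_deriv S t (clip (S t) (2 * L t - 1)) /\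
    right_deriv S' t (clip (S' t) (1 - 2 * L t)) /\
    right_deriv L t (clip (L t) (2 * (S t - S' t)))).
  { intros t Ht. destruct (Hrd0 t Ht) as [A [B C]].
    rewrite dJS in A. rewrite dJS' in B. rewrite dJL in C. auto. }
  clear Hrd0.
  set (l0 := L 0). set (s0 := S 0).
  assert (E1 : L 0 = l0) by reflexivity. assert (E2 : S 0 = s0) by reflexivity.
  assert (E3 : S' 0 = s0) by (unfold s0; lra).
  clearbody l0 s0.
  assert (Mup : forall (f : R -> R) (k : R) a b, 0 <= a <= b ->
     (forall t, a < t <= b -> continuous f t) ->
     (forall t, a <= t < b -> exists v, right_deriv f t v /\ k <= v) ->
     f a - k * a <= f b - k * b).
  { intros f k a b Hab Hc Hv.
    apply (pc_mono (fun x => f x - k * x)). lra.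
    intros t Ht; apply cont_l1, Hc, Ht.
    intros t Ht. destruct (Hv t Ht) as [v [Hv1 Hv2]]. exact (rd_up f t v k Hv1 Hv2). }
  assert (Mdown : forall (f : R -> R) (k : R) a b, 0 <= a <= b ->
     (forall t, a < t <= b -> continuous f t) ->
     (forall t, a <= t < b -> exists v, right_deriv f t v /\ v <= k) ->
     k * a - f a <= k * b - f b).
  { intros f k a b Hab Hc Hv.
    apply (pc_mono (fun x => k * x - f x)). lra.
    intros t Ht; apply cont_l2, Hc, Ht.
    intros t Ht. destruct (Hv t Ht) as [v [Hv1 Hv2]]. exact (rd_down f t v k Hv1 Hv2). }
  assert (Inv : forall t, 0 <= t -> L t >= l0 /\ S t >= s0 /\ S' t <= s0).
  { apply pc_real_ind. intros c Hc0 Hlt.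
    assert (Pc : L c >= l0 /\ S c >= s0 /\ S' c <= s0).
    { destruct (Req_dec c 0) as [->|Hne].
      { lra. }
      destruct (Hcont c ltac:(lra)) as [C1 [C2 C3]].
      split; [|split].
      - apply (pc_closed_ge L c l0); [lra|exact C3|]. intros t Ht; apply (Hlt t Ht).
      - apply (pc_closed_ge S c s0); [lra|exact C1|]. intros t Ht; apply (Hlt t Ht).
      - apply (pc_closed_le S' c s0); [lra|exact C2|]. intros t Ht; apply (Hlt t Ht). }
    destruct Pc as [Pc1 [Pc2 Pc3]].
    destruct (Hrd c Hc0) as [_ [_ HLc]].
    destruct (rd_cont L c _ HLc (l0 - 1/2) ltac:(lra)) as [d [Hd Hd']].
    exists d. split; [exact Hd|].
    assert (Lhalf : forall t, c <= t < c + d -> L t > 1/2).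
    { intros t Ht. destruct (Req_dec t c) as [->|Hne]; [lra|].
      specialize (Hd' (t - c) ltac:(lra)). replace (c + (t - c)) with t in Hd' by ring.
      apply Rabs_def2 in Hd'. lra. }
    assert (Sup : forall x, c <= x < c + d -> S c <= S x).
    { intros x Hx. pose proof (Mup S 0 c x ltac:(lra)) as M.
      assert (S c - 0 * c <= S x - 0 * x); [|lra]. apply M.
      - intros t Ht; apply Hcont; lra.
      - intros t Ht. exists (clip (S t) (2 * L t - 1)). split.
        apply Hrd; lra. apply clip_nn. specialize (Lhalf t ltac:(lra)). lra. }
    assert (S'dn : forall x, c <= x < c + d -> S' x <= S' c).
    { intros x Hx. pose proof (Mdown S' 0 c x ltac:(lra)) as M.
      assert (0 * c - S' c <= 0 * x - S' x); [|lra]. apply M.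
      - intros t Ht; apply Hcont; lra.
      - intros t Ht. exists (clip (S' t) (1 - 2 * L t)). split.
        apply Hrd; lra. apply clip_np. specialize (Lhalf t ltac:(lra)). lra. }
    assert (Lup : forall x, c <= x < c + d -> L c <= L x).
    { intros x Hx. pose proof (Mup L 0 c x ltac:(lra)) as M.
      assert (L c - 0 * c <= L x - 0 * x); [|lra]. apply M.
      - intros t Ht; apply Hcont; lra.
      - intros t Ht. exists (clip (L t) (2 * (S t - S' t))). split.
        apply Hrd; lra. apply clip_nn.
        specialize (Sup t ltac:(lra)). specialize (S'dn t ltac:(lra)). lra. }
    intros t Ht. destruct (Rlt_dec t c) as [Hl|Hl]; [apply Hlt; lra|].
    specialize (Sup t ltac:(lra)). specialize (S'dn t ltac:(lra)). specialize (Lup t ltac:(lra)).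
    lra. }
  set (k := 2 * l0 - 1).
  assert (Hk : 0 < k) by (unfold k; lra).
  assert (HS1 : exists t1, 0 <= t1 /\ S t1 = 1).
  { apply NNPP; intro Hn.
    assert (Hlt1 : forall t, 0 <= t -> S t < 1).
    { intros t Ht. destruct (Hbd t Ht) as [[_ B] _]. destruct (Req_dec (S t) 1); [|lra].
      exfalso; apply Hn; exists t; auto. }
    pose proof (Mup S k 0 (1/k) ltac:(split; [lra| apply Rlt_le, Rdiv_lt_0_compat; lra])) as M.
    assert (S 0 - k * 0 <= S (1/k) - k * (1/k)).
    { apply M. intros t Ht; apply Hcont; lra.
      intros t Ht. exists (clip (S t) (2 * L t - 1)). split. apply Hrd; lra.
      destruct (Inv t ltac:(lra)) as [I1 [I2 _]].
      rewrite clip_eq. unfold k; lra. lra. specialize (Hlt1 t ltac:(lra)); lra. }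
    assert (k * (1/k) = 1) by (field; lra).
    specialize (Hlt1 (1/k) ltac:(apply Rlt_le, Rdiv_lt_0_compat; lra)). lra. }
  assert (HS'0' : exists t2, 0 <= t2 /\ S' t2 = 0).
  { apply NNPP; intro Hn.
    assert (Hgt0 : forall t, 0 <= t -> 0 < S' t).
    { intros t Ht. destruct (Hbd t Ht) as [_ [[B _] _]]. destruct (Req_dec (S' t) 0); [|lra].
      exfalso; apply Hn; exists t; auto. }
    pose proof (Mdown S' (-k) 0 (1/k) ltac:(split; [lra| apply Rlt_le, Rdiv_lt_0_compat; lra])) as M.
    assert (-k * 0 - S' 0 <= -k * (1/k) - S' (1/k)).
    { apply M. intros t Ht; apply Hcont; lra.
      intros t Ht. exists (clip (S' t) (1 - 2 * L t)). split. apply Hrd; lra.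
      destruct (Inv t ltac:(lra)) as [I1 [_ I3]].
      rewrite clip_eq. unfold k; lra. specialize (Hgt0 t ltac:(lra)); lra. lra. }
    assert (k * (1/k) = 1) by (field; lra).
    specialize (Hgt0 (1/k) ltac:(apply Rlt_le, Rdiv_lt_0_compat; lra)). lra. }
  destruct HS1 as [t1 [Ht1 St1]]. destruct HS'0' as [t2 [Ht2 St2]].
  assert (Smono : forall a b, 0 <= a <= b -> S a <= S b).
  { intros a b Hab. pose proof (Mup S 0 a b Hab) as M.
    assert (S a - 0 * a <= S b - 0 * b); [|lra]. apply M.
    - intros t Ht; apply Hcont; lra.
    - intros t Ht. exists (clip (S t) (2 * L t - 1)). split.
      apply Hrd; lra. apply clip_nn. destruct (Inv t ltac:(lra)) as [I1 _]. lra. }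
  assert (S'pc_mono : forall a b, 0 <= a <= b -> S' b <= S' a).
  { intros a b Hab. pose proof (Mdown S' 0 a b Hab) as M.
    assert (0 * a - S' a <= 0 * b - S' b); [|lra]. apply M.
    - intros t Ht; apply Hcont; lra.
    - intros t Ht. exists (clip (S' t) (1 - 2 * L t)). split.
      apply Hrd; lra. apply clip_np. destruct (Inv t ltac:(lra)) as [I1 _]. lra. }
  assert (Lmono : forall a b, 0 <= a <= b -> L a <= L b).
  { intros a b Hab. pose proof (Mup L 0 a b Hab) as M.
    assert (L a - 0 * a <= L b - 0 * b); [|lra]. apply M.
    - intros t Ht; apply Hcont; lra.
    - intros t Ht. exists (clip (L t) (2 * (S t - S' t))). split.
      apply Hrd; lra. apply clip_nn. destruct (Inv t ltac:(lra)) as [_ [I2 I3]]. lra. }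
  set (t3 := Rmax t1 t2).
  assert (H13 : t1 <= t3) by apply Rmax_l. assert (H23 : t2 <= t3) by apply Rmax_r.
  assert (Sone : forall t, t3 <= t -> S t = 1).
  { intros t Ht. pose proof (Smono t1 t ltac:(lra)). destruct (Hbd t ltac:(lra)) as [[_ B] _]. lra. }
  assert (S'zero : forall t, t3 <= t -> S' t = 0).
  { intros t Ht. pose proof (S'pc_mono t2 t ltac:(lra)). destruct (Hbd t ltac:(lra)) as [_ [[B _] _]]. lra. }
  assert (HL1 : exists t4, 0 <= t4 /\ L t4 = 1).
  { apply NNPP; intro Hn.
    assert (Hlt1 : forall t, 0 <= t -> L t < 1).
    { intros t Ht. destruct (Hbd t Ht) as [_ [_ [_ B]]]. destruct (Req_dec (L t) 1); [|lra].
      exfalso; apply Hn; exists t; auto. }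
    pose proof (Mup L 2 t3 (t3 + 1) ltac:(lra)) as M.
    assert (L t3 - 2 * t3 <= L (t3 + 1) - 2 * (t3 + 1)).
    { apply M. intros t Ht; apply Hcont; lra.
      intros t Ht. exists (clip (L t) (2 * (S t - S' t))). split. apply Hrd; lra.
      destruct (Inv t ltac:(lra)) as [I1 _].
      rewrite clip_eq, Sone, S'zero; try lra; specialize (Hlt1 t ltac:(lra)); lra. }
    specialize (Hlt1 (t3 + 1) ltac:(lra)). destruct (Hbd t3 ltac:(lra)) as [_ [_ [B _]]]. lra. }
  destruct HL1 as [t4 [Ht4 Lt4]].
  apply (is_lim_ext_loc (fun _ => 1)).
  { exists t4. intros x Hx. pose proof (Lmono t4 x ltac:(lra)).
    destruct (Hbd x ltac:(lra)) as [_ [_ [_ B]]]. lra. }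
  apply is_lim_const.
Qed.
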